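(* Let $\Sigma = (|\Sigma|, (\sigma^\alpha, M^\alpha)_\alpha)$ be a cone complex with integral structure, $N^\alpha=(M^\alpha)^\vee$, let $N$ be a lattice, and let $\varphi: |\Sigma| \to N_\mathbf{R}$ be a map whose restriction to each $\sigma^\alpha$ is induced by a map of lattices $N^\alpha \to N$. If $\sigma$ is a cone in $N$, $\Sigma'$ is a subdivision of $\Sigma$, and $\Sigma$ has $\sigma$-compatible geometric tropicalization with respect to $\varphi$, then $\Sigma'$ has $\sigma$-compatible geometric tropicalization with respect to $\varphi$.
   Context: Cones are rational polyhedral pointed cones. A cone complex with integral structure (in the sense of Kempf–Knudsen–Mumford–Saint-Donat) is a topological space $|\Sigma|$ that is a union of cones $\sigma^\alpha\subset N^\alpha_\mathbf{R}$ (each with integral structure from a lattice $M^\alpha$ of linear functions) glued along faces compatibly with integral structures. A subdivision $\Sigma'$ of $\Sigma$ is a cone complex with integral structure with $|\Sigma'|=|\Sigma|$ such that each cone of $\Sigma'$ is contained in a cone of $\Sigma$ with compatible integral structure and each cone of $\Sigma$ is a union of cones of $\Sigma'$. $\Sigma$ has $\sigma$-compatible geometric tropicalization with respect to $\varphi$ if for each index $\alpha$, $\varphi^{-1}(\sigma)\cap\sigma^\alpha$ is a face of $\sigma^\alpha$. *)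

(* Defs.v *)
From HB Require Import structures.
From mathcomp Require Import all_boot all_order all_algebra.
From mathcomp Require Import all_classical all_reals topology normedtype matrix_topology.
Set Implicit Arguments. Unset Strict Implicit. Unset Printing Implicit Defensive.
Import Order.TTheory GRing.Theory Num.Theory.
Import numFieldNormedType.Exports.
Local Open Scope classical_set_scope.
Local Open Scope ring_scope.

Section ConeComplexes.
Variable R : realType.

(* The lattice N^alpha is Z^n inside N^alpha_R = R^n (row vectors);
   M^alpha = (Z^n)^vee acts through the standard pairing. *)
Definition dotv n (u x : 'rV[R]_n) : R := \sum_(i < n) u 0 i * x 0 i.

Definition intv n (z : 'rV[int]_n) : 'rV[R]_n := map_mx (fun k : int => k%:~R) z.
Definition intm m n (z : 'M[int]_(m, n)) : 'M[R]_(m, n) :=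
  map_mx (fun k : int => k%:~R) z.

Definition cone_gen n (s : seq 'rV[R]_n) : set 'rV[R]_n :=
  [set x | exists c : 'I_(size s) -> R,
     (forall i, 0 <= c i) /\ x = \sum_(i < size s) c i *: s`_i].

Definition rpp_cone n (sigma : set 'rV[R]_n) : Prop :=
  (exists s : seq 'rV[int]_n, sigma = cone_gen (map (@intv n) s)) /\
  (forall x, sigma x -> sigma (- x) -> x = 0).

Definition is_face n (sigma F : set 'rV[R]_n) : Prop :=
  exists u : 'rV[R]_n, (forall x, sigma x -> 0 <= dotv u x) /\
    F = sigma `&` [set x | dotv u x = 0].

Variable X : topologicalType.

(* a cone sigma in R^n together with its identification with a subset of X *)
Record emb_cone := EmbCone {
  ec_dim : nat;
  ec_set : set 'rV[R]_ec_dim;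
  ec_map : 'rV[R]_ec_dim -> X }.
Arguments ec_set : clear implicits.
Arguments ec_map : clear implicits.

Definition ec_img (c : emb_cone) : set X := ec_map c @` ec_set c.

(* the lattice M of integral linear functions on the cone, viewed as
   (germs of) functions on its image in X *)
Definition ec_intf (c : emb_cone) : set (X -> R) :=
  [set f | exists u : 'rV[int]_(ec_dim c),
     forall x, ec_set c x -> f (ec_map c x) = dotv (intv u) x].

Definition compat_on (c c' : emb_cone) (S : set X) : Prop :=
  (forall f, ec_intf c f -> exists g, ec_intf c' g /\ forall p, S p -> f p = g p) /\
  (forall g, ec_intf c' g -> exists f, ec_intf c f /\ forall p, S p -> f p = g p).

(* Cone complex with integral structure (Kempf-Knudsen-Mumford-Saint-Donat)
   with underlying space |Sigma| = X. *)
Record cone_complex := ConeComplex {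
  cc_index : Type;
  cc_cone : cc_index -> emb_cone;
  cc_rpp : forall a, rpp_cone (ec_set (cc_cone a));
  cc_inj : forall a, {in ec_set (cc_cone a) &, injective (ec_map (cc_cone a))};
  cc_cont : forall a, {within ec_set (cc_cone a), continuous (ec_map (cc_cone a))};
  cc_weak : forall A : set X, closed A <->
      (forall a, closed (ec_set (cc_cone a) `&` ec_map (cc_cone a) @^-1` A));
  cc_cover : forall p : X, exists a, ec_img (cc_cone a) p;
  cc_glue : forall a b,
      ec_img (cc_cone a) `&` ec_img (cc_cone b) = set0 \/ exists F G,
      is_face (ec_set (cc_cone a)) F /\ is_face (ec_set (cc_cone b)) G /\
      ec_map (cc_cone a) @` F = ec_img (cc_cone a) `&` ec_img (cc_cone b) /\
      ec_map (cc_cone b) @` G = ec_img (cc_cone a) `&` ec_img (cc_cone b) /\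
      compat_on (cc_cone a) (cc_cone b) (ec_img (cc_cone a) `&` ec_img (cc_cone b))
}.

Arguments cc_cone : clear implicits.

Definition subdivision (Sigma' Sigma : cone_complex) : Prop :=
  (forall b : cc_index Sigma', exists a : cc_index Sigma,
      ec_img (cc_cone Sigma' b) `<=` ec_img (cc_cone Sigma a) /\
      compat_on (cc_cone Sigma' b) (cc_cone Sigma a) (ec_img (cc_cone Sigma' b))) /\
  (forall a : cc_index Sigma, exists B : set (cc_index Sigma'),
      ec_img (cc_cone Sigma a) = \bigcup_(b in B) ec_img (cc_cone Sigma' b)).

Definition lattice_induced (Sigma : cone_complex) d (phi : X -> 'rV[R]_d) : Prop :=
  forall a, exists L : 'M[int]_(ec_dim (cc_cone Sigma a), d),
    forall x, ec_set (cc_cone Sigma a) x -> phi (ec_map (cc_cone Sigma a) x) = x *m intm L.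

Definition compat_geom_trop (Sigma : cone_complex) d (phi : X -> 'rV[R]_d)
    (sigma : set 'rV[R]_d) : Prop :=
  forall a, is_face (ec_set (cc_cone Sigma a))
    (ec_set (cc_cone Sigma a) `&` ec_map (cc_cone Sigma a) @^-1` (phi @^-1` sigma)).

End ConeComplexes.

Arguments lattice_induced {R X} Sigma {d} phi.
Arguments compat_geom_trop {R X} Sigma {d} phi sigma.
Arguments subdivision {R X} Sigma' Sigma.

(* Main.v *)
Require Import Defs.
From HB Require Import structures.
From mathcomp Require Import all_boot all_order all_algebra.
From mathcomp Require Import all_classical all_reals topology normedtype matrix_topology.
Import Order.TTheory GRing.Theory Num.Theory.
Import numFieldNormedType.Exports.
Local Open Scope classical_set_scope.
Local Open Scope ring_scope.

Local Notation eset c := (@ec_set _ _ c).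
Local Notation emap c := (@ec_map _ _ c).
Local Notation cone S a := (@cc_cone _ _ S a).

Lemma coord_intf (R : realType) (X : topologicalType) (c : emb_cone R X)
  (i : 'I_(ec_dim c)) :
  {in eset c &, injective (emap c)} ->
  exists f, ec_intf c f /\ forall x, eset c x -> f (emap c x) = x 0 i.
Proof.
move=> inj.
pose pre p := xget 0 [set x | eset c x /\ emap c x = p].
have preP x : eset c x -> pre (emap c x) = x.
  move=> hx.
  have [h1 h2] : eset c (pre (emap c x)) /\ emap c (pre (emap c x)) = emap c x.
    by apply: (xgetPex 0 (P := [set y | eset c y /\ emap c y = emap c x])); exists x.
  by apply: inj; rewrite ?inE.
have dE (x : 'rV[R]_(ec_dim c)) : dotv (intv _ (delta_mx 0 i)) x = x 0 i.
  rewrite /dotv (bigD1 i) //= big1 ?addr0.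
    by rewrite /intv mxE mxE !eqxx mul1r.
  by move=> j /negPf hj; rewrite /intv !mxE eqxx hj /= mul0r.
exists (fun p => (pre p) 0 i); split.
  by exists (delta_mx 0 i) => x hx; rewrite preP // dE.
by move=> x hx; rewrite preP.
Qed.

Theorem lemma5p9 (R : realType) (X : topologicalType)
    (Sigma Sigma' : cone_complex R X) (d : nat) (phi : X -> 'rV[R]_d)
    (sigma : set 'rV[R]_d) :
  lattice_induced Sigma phi ->
  rpp_cone sigma ->
  subdivision Sigma' Sigma ->
  compat_geom_trop Sigma phi sigma ->
  compat_geom_trop Sigma' phi sigma.
Proof.
move=> _ _ [Hsub _] Hface b.
have [a [Himg [_ Hcomp]]] := Hsub b.
have [u [Hu0 HF]] := Hface a.
have Hv : forall i : 'I_(ec_dim (cone Sigma a)),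
    exists v : 'rV[int]_(ec_dim (cone Sigma' b)),
    forall x y, eset (cone Sigma a) x -> eset (cone Sigma' b) y ->
      emap (cone Sigma a) x = emap (cone Sigma' b) y ->
      dotv (intv _ v) y = x 0 i.
  move=> i.
  have [f [hf hfx]] := coord_intf _ _ _ i (@cc_inj _ _ Sigma a).
  have [g [[v hv] hgf]] := Hcomp f hf.
  exists v => x y hx hy hxy.
  rewrite -(hv y hy) hgf; last by exists y.
  by rewrite -hxy hfx.
have [v hv] := choice Hv.
pose u' := \sum_i u 0 i *: intv _ (v i).
have key : forall y, eset (cone Sigma' b) y -> exists x,
    [/\ eset (cone Sigma a) x,
        emap (cone Sigma a) x = emap (cone Sigma' b) y &
        dotv u' y = dotv u x].
  move=> y hy.
  have [x hx hxy] : ec_img (cone Sigma a) (emap (cone Sigma' b) y).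
    by apply: Himg; exists y.
  exists x; split => //.
  rewrite /dotv /u'.
  under eq_bigr => j _ do rewrite summxE big_distrl /=.
  rewrite exchange_big /=; apply: eq_bigr => i _.
  rewrite -(hv i x y) // /dotv big_distrr /=; apply: eq_bigr => j _.
  by rewrite mxE mulrA.
exists u'; split.
  by move=> y hy; have [x [hx _ ->]] := key y hy; apply: Hu0.
apply/seteqP; split => y [hy hy2]; have [x [hx hxy hd]] := key y hy.
  split => //=; rewrite hd.
  have : (eset (cone Sigma a) `&` emap (cone Sigma a) @^-1` (phi @^-1` sigma)) x.
    by split => //=; rewrite hxy.
  by rewrite HF => -[].
split => //=; rewrite -hxy.
have : (eset (cone Sigma a) `&` [set x | dotv u x = 0]) x.
  by split => //=; rewrite -hd.
by rewrite -HF => -[].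
Qed.
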